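(* Let $X$ be a compactum, let $n\geq2$, and let $f:X\to X$ be a function. Consider the statements: (1) $f$ is an $F$-system; (2) $F_n(f)$ is an $F$-system; (3) $SF_n(f)$ is an $F$-system. Then (2) and (3) are equivalent, and (2) implies (1).
   Context: A compactum is a nondegenerate compact, perfect, Hausdorff topological space. $F_n(X)$ is the set of nonempty subsets of $X$ with at most $n$ points, with the Vietoris topology; $F_1(X)=\{\{x\}:x\in X\}$; $F_n(f)(A)=f(A)$. $SF_n(X)=F_n(X)/F_1(X)$ is the quotient collapsing $F_1(X)$ to a point, $q$ the quotient map, $F_X=q(F_1(X))$, and $SF_n(f)(\chi)=q(F_n(f)(q^{-1}(\chi)))$ for $\chi\neq F_X$, $SF_n(f)(F_X)=F_X$. A function $g:Z\to Z$ is transitive if for all nonempty open $U,V$ there is $k\in\mathbb{N}$ with $g^k(U)\cap V\neq\emptyset$; totally transitive if $g^m$ is transitive for all $m\in\mathbb{N}$; $g$ is an $F$-system if it is totally transitive and its set of periodic points ($z$ with $g^k(z)=z$ for some $k\in\mathbb{N}$) is dense in $Z$. *)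

(* Defs.v *)
From HB Require Import structures.
From mathcomp Require Import all_boot all_order.
From mathcomp Require Import all_classical all_reals all_analysis.
Set Implicit Arguments. Unset Strict Implicit. Unset Printing Implicit Defensive.
Local Open Scope classical_set_scope.

(** Dynamics relative to a given family [op] of open sets of a space [Z]. *)
Section Dyn.
Variables (Z : Type) (op : set Z -> Prop).

Definition transitive_map (g : Z -> Z) : Prop :=
  forall U V : set Z, op U -> op V -> U !=set0 -> V !=set0 ->
    exists k : nat, (0 < k)%N /\ (iter k g @` U) `&` V !=set0.

Definition totally_transitive (g : Z -> Z) : Prop :=
  forall m : nat, (0 < m)%N -> transitive_map (iter m g).

Definition periodic_point (g : Z -> Z) (z : Z) : Prop :=
  exists k : nat, (0 < k)%N /\ iter k g z = z.

Definition dense_wrt (S : set Z) : Prop :=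
  forall O : set Z, O !=set0 -> op O -> O `&` S !=set0.

Definition F_system (g : Z -> Z) : Prop :=
  totally_transitive g /\ dense_wrt (periodic_point g).
End Dyn.

Definition compactum (X : topologicalType) : Prop :=
  [/\ exists x y : X, x <> y, compact [set: X], perfect_set [set: X]
    & hausdorff_space X].

Section Hyperspace.
Variable X : topologicalType.

Definition Fn_pred (n : nat) (A : set X) : Prop :=
  A !=set0 /\ exists s : seq X, (size s <= n)%N /\ A = [set x | x \in s].

Definition Fn (n : nat) := {A : set X | Fn_pred n A}.

(* Vietoris topology on F_n(X): generated by the subbase
   <U>+ = {A | A `<=` U} and <U>- = {A | A meets U}, U open in X.
   S is open iff each of its points has a basic neighbourhood (finite
   intersection of subbasic sets) inside S. *)
Definition vietoris_open (n : nat) (S : set (Fn n)) : Prop :=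
  forall A : Fn n, S A ->
    exists (W : set X) (Us : seq (set X)),
      [/\ open W, (forall U, U \in Us -> open U),
          sval A `<=` W, (forall U, U \in Us -> sval A `&` U !=set0)
        & (forall B : Fn n, sval B `<=` W ->
             (forall U, U \in Us -> sval B `&` U !=set0) -> S B)].

Lemma Fn_pred_image (n : nat) (f : X -> X) (A : set X) :
  Fn_pred n A -> Fn_pred n (f @` A).
Proof.
move=> [[x Ax] [s [hs eA]]]; subst A; split; first by exists (f x); exists x.
exists (map f s); split; first by rewrite size_map.
apply/seteqP; split => y /=.
- by move=> [z zs <-]; apply/mapP; exists z.
- by move=> /mapP [z zs ->]; exists z.
Qed.

Definition Fn_map (n : nat) (f : X -> X) (A : Fn n) : Fn n :=
  exist _ (f @` sval A) (Fn_pred_image f (svalP A)).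

(* SF_n(X) = F_n(X)/F_1(X): concretely, the point F_X (None) together with
   the elements of F_n(X) having at least two points (Some A). *)
Definition SFn_pred (n : nat) (A : set X) : Prop :=
  Fn_pred n A /\ exists x y, [/\ A x, A y & x <> y].

Definition SFn (n : nat) := option {A : set X | SFn_pred n A}.

Definition q_map (n : nat) (A : Fn n) : SFn n :=
  match pselect (exists x y, [/\ sval A x, sval A y & x <> y]) with
  | left h => Some (exist _ (sval A) (conj (svalP A) h))
  | right _ => None
  end.

Definition SF_open (n : nat) (S : set (SFn n)) : Prop :=
  @vietoris_open n (@q_map n @^-1` S).

(* SF_n(f)(chi) = q(F_n(f)(q^{-1}(chi))) for chi <> F_X; SF_n(f)(F_X) = F_X *)
Definition SFn_map (n : nat) (f : X -> X) (c : SFn n) : SFn n :=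
  match c with
  | None => None
  | Some A => @q_map n (@Fn_map n f (exist _ (sval A) (proj1 (svalP A))))
  end.
End Hyperspace.

(* Main.v *)
Require Import Defs.
From mathcomp Require Import all_boot all_order.
From mathcomp Require Import all_classical all_reals all_analysis.
Set Implicit Arguments. Unset Strict Implicit. Unset Printing Implicit Defensive.
Local Open Scope classical_set_scope.

Section H.
Variables (X : topologicalType) (n : nat).

Lemma Fn_ext (A B : Fn X n) : sval A = sval B -> A = B.
Proof. by case: A => a pa; case: B => b pb /= e; apply: eq_exist. Qed.

Lemma iter_comm (T U : Type) (q : T -> U) (g : T -> T) (h : U -> U) :
  (forall x, q (g x) = h (q x)) -> forall k x, q (iter k g x) = iter k h (q x).
Proof. by move=> H; elim=> //= k IH x; rewrite H IH. Qed.

Lemma sval_iter (g : Fn X n -> Fn X n) (h : X -> X) :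
  (forall A, sval (g A) = h @` sval A) ->
  forall k A, sval (iter k g A) = iter k h @` sval A.
Proof.
move=> H; elim=> [|k IH] A /=.
  by apply/seteqP; split=> [x Ax|x [y Ay <-]] //; exists x.
rewrite H IH; apply/seteqP; split=> [x [y [z Az <-] <-]|x [z Az <-]].
  by exists z.
by exists (iter k h z) => //; exists z.
Qed.

Lemma q_comm (f : X -> X) (A : Fn X n) :
  q_map (Fn_map f A) = SFn_map f (q_map A).
Proof.
rewrite {2}/q_map; case: pselect => [h|nh] /=.
  by congr (q_map (Fn_map f _)); apply: Fn_ext.
rewrite /q_map; case: pselect => // -[u [v [[x Ax ex] [y Ay ey] fxy]]].
exfalso; apply: fxy; rewrite -ex -ey; have -> // : x = y.
by apply: contrapT => xy; apply: nh; exists x, y.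
Qed.
End H.
Section H2.
Variables (X : topologicalType) (n : nat).

Lemma Fn_pred_single (x : X) : (0 < n)%N -> Fn_pred n [set x].
Proof.
move=> n0; split; first by exists x.
exists [:: x]; split => //; apply/seteqP; split => y /=.
  by move=> ->; rewrite inE.
by rewrite inE => /eqP.
Qed.

Lemma svm (f : X -> X) m (A : Fn X n) :
  sval (iter m (Fn_map f) A) = iter m f @` sval A.
Proof. exact: (@sval_iter X n (Fn_map f) f (fun _ => erefl)). Qed.

Lemma F_to_X (f : X -> X) : (0 < n)%N ->
  F_system (@vietoris_open X n) (Fn_map f) -> F_system (@open X) f.
Proof.
move=> n0 [TT DP].
have box_open : forall U : set X, open U ->
    vietoris_open [set A : Fn X n | sval A `<=` U].
  by move=> U oU A /= AU; exists U, [::]; split.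
have box_ne : forall U : set X, U !=set0 ->
    [set A : Fn X n | sval A `<=` U] !=set0.
  by move=> U [u Uu]; exists (exist _ [set u] (Fn_pred_single u n0)) => /= x ->.
split.
- move=> m m0 U V oU oV U0 V0.
  have [k [k0 [B [[A AU <-] BV]]]] := TT m m0 _ _ (box_open U oU)
    (box_open V oV) (box_ne U U0) (box_ne V V0).
  exists k; split => //.
  have [a Aa] := (svalP A).1.
  exists (iter k (iter m f) a); split; first by exists a => //; apply: AU.
  apply: BV; rewrite (@sval_iter X n _ _ (svm f m)).
  by exists a.
- move=> O [x0 Oo] oO.
  have [A [AO [k [k0 kA]]]] := DP _ (box_ne O (ex_intro _ x0 Oo)) (box_open O oO).
  have e : iter k f @` sval A = sval A by rewrite -svm kA.
  pose g := iter k f.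
  have gA : forall x, sval A x -> sval A (g x) by move=> x Ax; rewrite -e; exists x.
  have [[a Aa] [s [_ sA]]] := svalP A.
  have gi : forall i, sval A (iter i g a) by elim => //= i IH; apply: gA.
  pose t := [seq iter i g a | i <- iota 0 (size s).+1].
  have nu : ~~ uniq t.
    apply/negP => ut.
    have := uniq_leq_size ut.
    have sub : {subset t <= s}.
      by move=> y /mapP [i _ ->]; have := gi i; rewrite sA.
    move=> /(_ s sub).
    by rewrite size_map size_iota ltnn.
  have [i [j [ij jt e2]]] := uniqPn a nu.
  have ht : size t = (size s).+1 by rewrite size_map size_iota.
  rewrite !(nth_map 0%N) ?size_iota -?ht ?(ltn_trans ij) // !nth_iota -?ht
     ?(ltn_trans ij) // !add0n in e2.
  exists (iter i g a); split; first by apply: AO; apply: gi.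
  exists ((j - i) * k)%N; split; first by rewrite muln_gt0 subn_gt0 ij.
  by rewrite iterM -iterD subnK ?(ltnW ij).
Qed.
End H2.
Section H3.
Variables (X : topologicalType) (n : nat).

Lemma q_surj (x0 : X) : (0 < n)%N -> forall c : SFn X n, exists A, q_map A = c.
Proof.
move=> n0 [B|]; last first.
  exists (exist _ [set x0] (Fn_pred_single x0 n0)); rewrite /q_map.
  by case: pselect => // h; exfalso; move: h => [x [y [/= -> -> []]]].
exists (exist _ (sval B) (proj1 (svalP B))); rewrite /q_map.
case: pselect => [h|[]]; last by case: B => b [].
by congr Some; case: B h => b pb h /=; apply: eq_exist.
Qed.

Lemma F_to_SF (f : X -> X) (x0 : X) : (0 < n)%N ->
  F_system (@vietoris_open X n) (Fn_map f) -> F_system (@SF_open X n) (SFn_map f).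
Proof.
move=> n0 [TT DP].
have qc := iter_comm (@q_comm X n f).
have qcc := fun m => iter_comm (qc m).
split.
- move=> m m0 U V oU oV [c Uc] [d Vd].
  have [A qA] := q_surj x0 n0 c; have [B qB] := q_surj x0 n0 d.
  have hU : (@q_map X n @^-1` U) !=set0 by exists A; rewrite /= qA.
  have hV : (@q_map X n @^-1` V) !=set0 by exists B; rewrite /= qB.
  have [k [k0 [C [[A' A'U <-] CV]]]] := TT m m0 _ _ oU oV hU hV.
  exists k; split => //; exists (q_map (iter k (iter m (Fn_map f)) A')); split => //.
  by exists (q_map A') => //; rewrite qcc.
- move=> O [c Oc] oO.
  have [A qA] := q_surj x0 n0 c.
  have hO : (@q_map X n @^-1` O) !=set0 by exists A; rewrite /= qA.
  have [B [BO [k [k0 kB]]]] := DP _ hO oO.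
  exists (q_map B); split => //; exists k; split => //.
  by rewrite -qc kB.
Qed.
End H3.
Section H4.
Variables (X : topologicalType) (n : nat).

Definition P2 (B : Fn X n) := exists x y, [/\ sval B x, sval B y & x <> y].

Lemma open_all (Us : seq (set X)) : (forall U, U \in Us -> open U) ->
  open [set x | forall U, U \in Us -> U x].
Proof.
elim: Us => [|U0 Us IH] hU.
  have -> : [set x : X | forall U : set X, U \in [::] -> U x] = setT.
    by apply/seteqP; split => // x _ U; rewrite in_nil.
  exact: openT.
have -> : [set x : X | forall U : set X, U \in U0 :: Us -> U x] =
    U0 `&` [set x | forall U : set X, U \in Us -> U x].
  apply/seteqP; split => x /=.
    by move=> h; split; [apply: h; rewrite mem_head|move=> U hV; apply: h; rewrite in_cons hV orbT].
  by move=> [h0 h] U; rewrite in_cons => /orP [/eqP ->|/h].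
apply: openI; first by apply: hU; rewrite mem_head.
by apply: IH => U hU'; apply: hU; rewrite in_cons hU' orbT.
Qed.

Lemma refine (UU : set (Fn X n)) : (2 <= n)%N -> hausdorff_space X ->
  perfect_set [set: X] -> vietoris_open UU -> UU !=set0 ->
  exists U' : set (Fn X n), [/\ vietoris_open U', U' `<=` UU, U' !=set0 &
     forall B, U' B -> P2 B].
Proof.
move=> n2 hX perf oU [A UA].
have [W [Us [oW oUs AW AUs HS]]] := oU A UA.
have [A2 [A2W A2Us [x [y [A2x A2y xy]]]]] : exists A2 : Fn X n,
   [/\ sval A2 `<=` W, (forall U, U \in Us -> sval A2 `&` U !=set0) & P2 A2].
  have [h|nh] := pselect (P2 A); first by exists A.
  have [a Aa] := (svalP A).1.
  have eqa : forall z, sval A z -> z = a.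
    by move=> z Az; apply: contrapT => za; apply: nh; exists z, a.
  pose G := W `&` [set x | forall U, U \in Us -> U x].
  have Ga : G a.
    split; first exact: AW.
    by move=> U hU; have [z [Az Uz]] := AUs U hU; rewrite -(eqa z Az).
  have nG : nbhs a G by apply: open_nbhs_nbhs; split => //; apply: openI => //; exact: open_all.
  have : limit_point [set: X] a by rewrite perf.2.
  move=> /(_ G nG) [b [/eqP ba _ Gb]].
  have pr : Fn_pred n [set z | z \in [:: a; b]].
    split; first by exists a; rewrite /= mem_head.
    by exists [:: a; b]; split.
  exists (exist _ _ pr); split => /=.
  - move=> z /=; rewrite !in_cons in_nil orbF => /orP [/eqP ->|/eqP ->]; [exact: Ga.1|exact: Gb.1].
  - by move=> U hU; exists a; split; [rewrite /= mem_head|exact: Ga.2].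
  - exists a, b; split => //=; [exact: mem_head|exact: (mem_last a [:: b])|by move=> e; apply: ba].
move: (hX); rewrite open_hausdorff => /(_ x y).
have /[swap]/[apply] : x != y by apply/eqP.
move=> [[Ga Gb] /= [xGa yGb] [oGa oGb /eqP GaGb]].
rewrite in_setE in xGa; rewrite in_setE in yGb.
pose U' := [set B : Fn X n | sval B `<=` W /\
   forall U, U \in Ga :: Gb :: Us -> sval B `&` U !=set0].
exists U'; split.
- move=> B [BW BU]; exists W, (Ga :: Gb :: Us); split => //.
  by move=> U; rewrite !in_cons => /orP [/eqP ->//|/orP [/eqP ->//|/oUs]].
- move=> B [BW BU]; apply: HS => // U hU; apply: BU; by rewrite !in_cons hU !orbT.
- exists A2; split => // U; rewrite !in_cons => /orP [/eqP ->|/orP [/eqP ->|/A2Us//]].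
    by exists x.
  by exists y.
- move=> B [_ BU].
  have [p [Bp Gap]] := BU Ga (mem_head _ _).
  have hb : Gb \in [:: Ga, Gb & Us] by rewrite !in_cons eqxx orbT.
  have [q [Bq Gbq]] := BU Gb hb.
  exists p, q; split => // pq; subst q.
  have : (Ga `&` Gb) p by [].
  by rewrite GaGb.
Qed.
End H4.
Section H5.
Variables (X : topologicalType) (n : nat).

Lemma qinj (A B : Fn X n) : P2 B -> q_map A = q_map B -> A = B.
Proof.
move=> hB; rewrite /q_map; case: pselect => ha; case: pselect => hb //.
  by case => e; apply: Fn_ext.
Qed.

Lemma q_open (U' : set (Fn X n)) : vietoris_open U' -> (forall B, U' B -> P2 B) ->
  SF_open (@q_map X n @` U').
Proof.
move=> oU hU A [B UB qBA].
have eAB := qinj (hU B UB) (esym qBA); subst A.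
have [W [Us [h1 h2 h3 h4 h5]]] := oU B UB.
by exists W, Us; split => // C C1 C2; exists C => //; exact: h5.
Qed.

Lemma SF_to_F (f : X -> X) : (2 <= n)%N -> hausdorff_space X ->
  perfect_set [set: X] ->
  F_system (@SF_open X n) (SFn_map f) -> F_system (@vietoris_open X n) (Fn_map f).
Proof.
move=> n2 hX perf [TS DS].
have qc := iter_comm (@q_comm X n f).
have qcc := fun m => iter_comm (qc m).
split.
- move=> m m0 U V oU oV U0 V0.
  have [U' [oU' U'U [A U'A] PU]] := refine n2 hX perf oU U0.
  have [V' [oV' V'V [B V'B] PV]] := refine n2 hX perf oV V0.
  have hU : (@q_map X n @` U') !=set0 by exists (q_map A); exists A.
  have hV : (@q_map X n @` V') !=set0 by exists (q_map B); exists B.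
  have [k [k0 [c [[c0 [A1 U'A1 <-] <-] [B1 V'B1 qB1]]]]] :=
    TS m m0 _ _ (q_open oU' PU) (q_open oV' PV) hU hV.
  exists k; split => //; exists (iter k (iter m (Fn_map f)) A1); split.
    by exists A1 => //; apply: U'U.
  rewrite -qcc in qB1.
  by rewrite (qinj (PV B1 V'B1) (esym qB1)); apply: V'V.
- move=> Q Q0 oQ.
  have [Qp [oQ' QpO [A QpA] PO]] := refine n2 hX perf oQ Q0.
  have hO : (@q_map X n @` Qp) !=set0 by exists (q_map A); exists A.
  have [c [[A1 QpA1 <-] [k [k0 kc]]]] := DS _ hO (q_open oQ' PO).
  exists A1; split; first exact: QpO.
  exists k; split => //; apply: qinj (PO A1 QpA1) _.
  by rewrite qc.
Qed.
End H5.

Theorem theorem19 (X : topologicalType) (n : nat) (f : X -> X) :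
  compactum X -> (2 <= n)%N ->
  (F_system (@vietoris_open X n) (Fn_map f) <->
     F_system (@SF_open X n) (SFn_map f)) /\
  (F_system (@vietoris_open X n) (Fn_map f) -> F_system (@open X) f).
Proof.
move=> [[x0 _] _ perf hX] n2.
have n0 : (0 < n)%N by apply: ltn_trans n2.
split; first split.
- exact: F_to_SF.
- exact: SF_to_F.
- exact: F_to_X.
Qed.
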